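(* For every integer $n\ge 0$, there is exactly one Dumont permutation of the first kind of length $2n$ avoiding the pattern $321$, i.e. $|\mathfrak D^1_{2n}(321)|=1$ (for $n=0$ the set consists of the empty permutation).
   Context: A Dumont permutation of the first kind of length $2n$ is a permutation $\pi\in\mathfrak S_{2n}$ such that for every $i=1,\dots,2n$: if $\pi(i)$ is even then $i<2n$ and $\pi(i)>\pi(i+1)$; if $\pi(i)$ is odd then $i=2n$ or $\pi(i)<\pi(i+1)$. $\mathfrak D^1_{2n}$ denotes the set of these. A permutation $\sigma$ contains a pattern $\tau\in\mathfrak S_k$ if some subsequence $(\sigma(i_1),\dots,\sigma(i_k))$, $i_1<\dots<i_k$, is order-isomorphic to $\tau$; otherwise $\sigma$ avoids $\tau$. $\mathfrak D^1_{2n}(T)$ denotes the set of permutations in $\mathfrak D^1_{2n}$ avoiding every pattern in $T$. *)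

(* Defs.v *)
From mathcomp Require Import all_boot all_order all_fingroup.
Set Implicit Arguments. Unset Strict Implicit. Unset Printing Implicit Defensive.

(* Permutations of {1,...,m} are represented as s : {perm 'I_m}, with
   positions and values shifted by one (0-indexed): the value s i : 'I_m
   stands for the integer (s i) + 1 and position i for i + 1. *)

(* value of s at (0-indexed) position j, as a nat; 0 outside the range
   (never used outside the range below). *)
Definition pval (m : nat) (s : {perm 'I_m}) (j : nat) : nat :=
  if insub j is Some o then val (s o) else 0.

Definition dumont1 (m : nat) (s : {perm 'I_m}) : bool :=
  [forall i : 'I_m,
     if ~~ odd (val (s i)).+1
     then (i.+1 < m) && (pval s i.+1 < val (s i))
     else (i.+1 == m) || (val (s i) < pval s i.+1)]%N.

Definition contains (k m : nat) (sigma : {perm 'I_m}) (tau : {perm 'I_k}) : bool :=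
  [exists f : {ffun 'I_k -> 'I_m},
    [forall a : 'I_k, forall b : 'I_k, (a < b)%N ==> (f a < f b)%N] &&
    [forall a : 'I_k, forall b : 'I_k,
       (sigma (f a) < sigma (f b))%N == (tau a < tau b)%N]].

Definition avoids (k m : nat) (sigma : {perm 'I_m}) (tau : {perm 'I_k}) : bool :=
  ~~ contains sigma tau.

(* the pattern 321, i.e. 1 -> 3, 2 -> 2, 3 -> 1; 0-indexed: i |-> 2 - i *)
Definition pat321 : {perm 'I_3} := perm (@rev_ord_inj 3).

Definition dumont1_avoid321 (n : nat) : {set {perm 'I_(n.*2)}} :=
  [set s : {perm 'I_(n.*2)} | dumont1 s && avoids s pat321].

(* Main.v *)
Require Import Defs.
From mathcomp Require Import all_boot all_order all_fingroup.
From mathcomp Require Import zify.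
Set Implicit Arguments. Unset Strict Implicit. Unset Printing Implicit Defensive.

Definition xr (j : nat) : nat := if odd j then j.-1 else j.+1.

Lemma xrK : cancel xr xr.
Proof.
move=> v; rewrite /xr; case: v => [|u] //=; case Ho: (odd u) => /=; rewrite ?Ho //.
Qed.

Lemma xr_le j : xr j <= j.+1.
Proof. rewrite /xr; case: (odd j); lia. Qed.
Lemma xr_ge j : j <= (xr j).+1.
Proof. rewrite /xr; case: (odd j); lia. Qed.

Lemma even_lt n i : ~~ odd i -> i < n.*2 -> i.+1 < n.*2.
Proof.
move=> He Hi; rewrite ltn_neqAle Hi andbT.
apply/negP => /eqP E. by move: (odd_double n); rewrite -E /= (negbTE He).
Qed.

Lemma xr_lt n i : i < n.*2 -> xr i < n.*2.
Proof.
rewrite /xr; case Ho: (odd i) => Hi; first lia.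
by apply: even_lt => //; rewrite Ho.
Qed.

Lemma pvalE m (s : {perm 'I_m}) (j : nat) (h : j < m) : Defs.pval s j = nat_of_ord (s (@Ordinal m j h)).
Proof. by rewrite /Defs.pval (insubT (fun k => k < m) h). Qed.

Section S.
Variable n : nat.
Local Notation m := n.*2.

Definition sigf (i : 'I_m) : 'I_m := Ordinal (xr_lt (ltn_ord i)).
Lemma sigf_inj : injective sigf.
Proof. move=> a b /(congr1 val) /= /(congr1 xr); rewrite !xrK => h; exact: val_inj. Qed.
Definition sig : {perm 'I_m} := perm sigf_inj.
Lemma sigE (i : 'I_m) : val (sig i) = xr i.
Proof. by rewrite permE. Qed.
Lemma sigE2 (i : 'I_m) : nat_of_ord (sig i) = xr i.
Proof. by rewrite permE. Qed.

Lemma contains321 (s : {perm 'I_m}) : contains s pat321 ->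
  exists i j k : 'I_m, [/\ i < j, j < k, s j < s i & s k < s j].
Proof.
case/existsP => f /andP [/forallP Hi /forallP Hc].
have I01 := implyP (forallP (Hi (@Ordinal 3 0 isT)) (@Ordinal 3 1 isT)).
have I12 := implyP (forallP (Hi (@Ordinal 3 1 isT)) (@Ordinal 3 2 isT)).
have C10 := eqP (forallP (Hc (@Ordinal 3 1 isT)) (@Ordinal 3 0 isT)).
have C21 := eqP (forallP (Hc (@Ordinal 3 2 isT)) (@Ordinal 3 1 isT)).
rewrite /pat321 !permE /= in C10 C21.
exists (f (@Ordinal 3 0 isT)), (f (@Ordinal 3 1 isT)), (f (@Ordinal 3 2 isT)); split.
- exact: I01.
- exact: I12.
- by rewrite C10.
- by rewrite C21.
Qed.

Lemma mk321 (s : {perm 'I_m}) (i j k : 'I_m) : i < j -> j < k -> s j < s i -> s k < s j ->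
  contains s pat321.
Proof.
move=> ij jk sij sjk.
apply/existsP; exists [ffun a : 'I_3 => nth i [:: i; j; k] a].
apply/andP; split; apply/forallP => a; apply/forallP => b;
  case: a => [[|[|[|a]]] Ha] //; case: b => [[|[|[|b]]] Hb] //;
  rewrite /pat321 ?permE !ffunE /=; try lia.
Qed.

Lemma odd_pred_neg i : odd i -> odd i.-1 = false.
Proof. by case: i => //= i /negbTE. Qed.

Lemma sig_dumont : dumont1 sig.
Proof.
apply/forallP => i; rewrite sigE /xr.
case Ho: (odd i) => /=; rewrite ?negbK.
- rewrite (odd_pred_neg Ho) /=.
  case: (ltnP i.+1 m) => h.
  + rewrite orbC (pvalE sig h) sigE2 /xr /= Ho /=. lia.
  + apply/orP; left; apply/eqP; have := ltn_ord i; lia.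
- rewrite Ho /=. have h := even_lt (negbT Ho) (ltn_ord i).
  rewrite h (pvalE sig h) sigE2 /xr /= Ho /=. lia.
Qed.

Lemma sig_avoid : avoids sig pat321.
Proof.
apply/negP => /contains321 [i [j [k [ij jk a b]]]].
rewrite !sigE2 in a b.
have := xr_le i; have := xr_ge k. lia.
Qed.

Lemma uniq_sig (s : {perm 'I_m}) : dumont1 s -> avoids s pat321 -> s = sig.
Proof.
move=> D A.
have Dd : forall i : 'I_m, odd (s i) -> exists h : i.+1 < m, s (Ordinal h) < s i.
  move=> i Hi; have := forallP D i; rewrite /= Hi /= => /andP [h1 h2].
  exists h1; by rewrite -(pvalE s h1).
have N3 : forall i j k : 'I_m, i < j -> j < k -> s j < s i -> s k < s j -> False.
  move=> i j k ij jk a b; move/negP: A; apply; exact: mk321 ij jk a b.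
suff H : forall k (j : 'I_m), j < k.*2 -> nat_of_ord (s j) = xr j.
  apply/permP => i; apply: val_inj; rewrite sigE; apply: (H n); exact: ltn_ord.
elim=> [|k IH] j Hj; first by [].
have low : forall j : 'I_m, k.*2 <= j -> k.*2 <= s j.
  move=> j0 hj0; rewrite leqNgt; apply/negP => hv.
  have hi : xr (s j0) < m by have := xr_le (s j0); have := ltn_ord j0; lia.
  have := IH (Ordinal hi) => /=; rewrite xrK.
  have : xr (s j0) < k.*2 by rewrite /xr; case Ho: (odd (s j0)); [lia | apply: even_lt => //; rewrite Ho].
  move=> hlt /(_ hlt) /val_inj /perm_inj /(congr1 val) /= E; lia.
case: (ltnP j k.*2) => hjk; first exact: IH.
have h2k : k.*2.+1 < m.
  have : k.*2 < m by have := ltn_ord j; lia.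
  apply: even_lt; by rewrite odd_double.
pose t : 'I_m := Ordinal h2k.
pose r := (s^-1)%g t.
have sr : s r = t by rewrite permKV.
have [h1 sr1] : exists h : r.+1 < m, s (Ordinal h) < s r by apply: Dd; rewrite sr /= odd_double.
rewrite sr /= in sr1.
have rge : k.*2 <= r.
  rewrite leqNgt; apply/negP => hr.
  have := IH r; rewrite sr /= => /(_ hr) E; have := xr_le r; lia.
have s1 : nat_of_ord (s (Ordinal h1)) = k.*2.
  have X := low (Ordinal h1) (leqW rge); lia.
have ha : k.*2 < m by lia.
pose a : 'I_m := Ordinal ha.
case: (ltnP k.*2 r) => hr.
  exfalso; apply: (N3 a r (Ordinal h1)) => //=.
  - rewrite sr /=. have := low a (leqnn _).
    have na : s a != t by apply/eqP => E; move: E; rewrite -sr => /perm_inj E; move: hr; rewrite -E /=; lia.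
    have nb : nat_of_ord (s a) != k.*2.
      apply/eqP => E. have : s a = s (Ordinal h1) by apply: ord_inj; rewrite E s1.
      move/perm_inj/(congr1 (@nat_of_ord m)) => /=; lia.
    move: na; rewrite -(inj_eq val_inj) /=; lia.
  - rewrite s1 sr /=; lia.
have rE : nat_of_ord r = k.*2 by lia.
have jE : j = k.*2 :> nat \/ j = k.*2.+1 :> nat by lia.
case: jE => jE.
  have -> : j = r by apply: ord_inj; lia.
  by rewrite sr /xr rE odd_double.
have -> : j = Ordinal h1 by apply: ord_inj; rewrite /=; lia.
by rewrite s1 /xr /= rE odd_double.
Qed.

End S.

Theorem theorem2p3 (n : nat) : #|dumont1_avoid321 n| = 1%N.
Proof.
have -> : dumont1_avoid321 n = [set sig n].
  apply/setP => s; rewrite !inE; apply/andP/eqP.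
  - by case=> D A; exact: uniq_sig.
  - by move=> ->; split; [exact: sig_dumont | exact: sig_avoid].
exact: cards1.
Qed.
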